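(* Let $T>0$, $M$ and $N$ be positive integers, $\tau=T/M$, $t_k=k\tau$ ($k=0,\dots,M$), $h=1/N$ and $x_r=rh$ ($r=0,\dots,N$). Let $u:\Omega=[0,1]\times[0,T]\to\mathbb{R}$ be such that $\partial_x^4 u$ is continuous on $\Omega$, and write $u_{k}(x)=u(x,t_{k})$. Let $1<\beta<2$ and $0\le k\le M-1$. For an integer $m\ge 1$ and $\eta>0$ put $c^{\eta}_m=\frac{(m-1)^{\eta}-m^{\eta}}{\eta}$, and set $\nu_h^{\beta}=\frac{h^{2-\beta}}{\Gamma(2-\beta)}$. For $1\le r\le N-1$ define the weights $w^{\beta}_{j,r}$, $j=0,\dots,r$, by \[ w^{\beta}_{j,r}=\tilde w^{\beta}_{j-1,0}-\tilde w^{\beta}_{j,1}, \] where $\tilde w^{\beta}_{-1,0}=0$, $\tilde w^{\beta}_{r,1}=0$, and for $\rho\in\{0,1\}$ and $m=1,\dots,r$, \[ \tilde w^{\beta}_{r-m,\rho}=c^{3-\beta}_{m}-(m-\rho)\,c^{2-\beta}_{m}. \] (Equivalently: $w^{\beta}_{0,r}=-\big(c^{3-\beta}_r-(r-1)c^{2-\beta}_r\big)$, $w^{\beta}_{r,r}=c^{3-\beta}_1-c^{2-\beta}_1$, and for $1\le j\le r-1$, $w^{\beta}_{j,r}=\big(c^{3-\beta}_{r-j+1}-(r-j+1)c^{2-\beta}_{r-j+1}\big)-\big(c^{3-\beta}_{r-j}-(r-j-1)c^{2-\beta}_{r-j}\big)$.) Then for $r=1,\dots,N-1$, \[ D_x^{\beta}u_{k+1}(x_r)=\nu_h^{\beta}\sum_{j=0}^{r}w^{\beta}_{j,r}\,u_{k+1}''(x_j)+R_h^{\beta}(r),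 \] where the remainder satisfies \[ \|R_h^{\beta}\|_{\infty}\le\frac{h^{2}\mathcal{M}_u}{8\,\Gamma(3-\beta)},\qquad \mathcal{M}_u=\sup_{(x,t)\in\Omega}\Big|\frac{\partial^4 u}{\partial x^4}(x,t)\Big|. \]
   Context: For $1<\beta<2$, the Caputo derivative in $x$ is $D_x^{\beta}f(x)=\frac{1}{\Gamma(2-\beta)}\int_0^{x}(x-s)^{1-\beta}f''(s)\,ds$ for $x>0$. Here $u_{k+1}''$ denotes the second derivative of $x\mapsto u(x,t_{k+1})$, and $\|R_h^\beta\|_\infty$ denotes the maximum of $|R_h^\beta(r)|$ over $r=1,\dots,N-1$. *)

(* Defs.v *)
From Stdlib Require Import Reals Lra.
From Coquelicot Require Import Coquelicot.
Open Scope R_scope.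

(* Real power with the convention 0^a = 0 (and x^a = exp(a ln x) for x > 0).
   Only used with nonnegative bases. *)
Definition rpow (x a : R) : R :=
  if Rlt_dec 0 x then Rpower x a else 0.

Definition Gamma (z : R) : R :=
  RInt_gen (fun t => rpow t (z - 1) * exp (- t)) (at_right 0) (Rbar_locally p_infty).

(* Caputo derivative of order 1<beta<2 of a function f at x>0, given the
   second derivative f2 = f'' :
     D^beta f(x) = 1/Gamma(2-beta) int_0^x (x-s)^(1-beta) f''(s) ds
   (improper at s = x). *)
Definition caputo (beta : R) (f2 : R -> R) (x : R) : R :=
  / Gamma (2 - beta) *
  RInt_gen (fun s => rpow (x - s) (1 - beta) * f2 s) (at_point 0) (at_left x).

Definition derive_within (D : R -> Prop) (f : R -> R) (x l : R) : Prop :=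
  forall eps, 0 < eps -> exists delta, 0 < delta /\
    forall y, D y -> Rabs (y - x) < delta ->
      Rabs (f y - f x - l * (y - x)) <= eps * Rabs (y - x).

Definition I01 (x : R) : Prop := 0 <= x <= 1.

Definition cc (eta : R) (m : nat) : R :=
  (rpow (INR m - 1) eta - rpow (INR m) eta) / eta.

(* wtilde^beta_{j-1,0}, with wtilde_{-1,0} = 0; index r-m = j-1, i.e. m = r-j+1 *)
Definition wt0 (beta : R) (j r : nat) : R :=
  match j with
  | O => 0
  | S _ => let m := (r - j + 1)%nat in
           cc (3 - beta) m - INR m * cc (2 - beta) m
  end.

(* wtilde^beta_{j,1}, with wtilde_{r,1} = 0; index r-m = j, i.e. m = r-j *)
Definition wt1 (beta : R) (j r : nat) : R :=
  if Nat.eqb j r then 0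
  else let m := (r - j)%nat in
       cc (3 - beta) m - (INR m - 1) * cc (2 - beta) m.

Definition w (beta : R) (j r : nat) : R := wt0 beta j r - wt1 beta j r.

(* Main.v *)
Require Import Defs.
From Stdlib Require Import Reals Lra Lia Classical.
From Coquelicot Require Import Coquelicot.
Open Scope R_scope.

Lemma rpow_pos y e : 0 < y -> rpow y e = Rpower y e.
Proof. intros H; unfold rpow; destruct (Rlt_dec 0 y); [reflexivity|lra]. Qed.

Lemma rpow_nonpos y e : y <= 0 -> rpow y e = 0.
Proof. intros H; unfold rpow; destruct (Rlt_dec 0 y); [lra|reflexivity]. Qed.

Lemma Rpower_pos y e : 0 < Rpower y e.
Proof. unfold Rpower; apply exp_pos. Qed.

Lemma rpow_ge0 y e : 0 <= rpow y e.
Proof. unfold rpow; destruct (Rlt_dec 0 y). left; apply Rpower_pos. lra. Qed.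

Lemma is_derive_Rpower t e : 0 < t ->
  is_derive (fun t => Rpower t e) t (e * Rpower t (e - 1)).
Proof. intros H; apply is_derive_Reals, derivable_pt_lim_power, H. Qed.

Lemma der_rpow t e : 0 < t ->
  is_derive (fun t => rpow t e) t (e * Rpower t (e - 1)).
Proof.
  intros H.
  apply is_derive_ext_loc with (fun t => Rpower t e).
  - exists (mkposreal t H). intros y Hy. simpl in Hy.
    unfold ball in Hy; simpl in Hy; unfold AbsRing_ball, abs, minus, plus, opp in Hy; simpl in Hy.
    rewrite rpow_pos; [reflexivity|]. apply Rabs_def2 in Hy. lra.
  - apply is_derive_Rpower, H.
Qed.

Lemma der_rpow_shift x e s : s < x ->
  is_derive (fun s => rpow (x - s) e) s (- (e * Rpower (x - s) (e - 1))).
Proof.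
  intros H.
  assert (H1 : is_derive (fun s => x - s) s (-1)).
  { auto_derive; auto; ring. }
  pose proof (is_derive_comp (fun t => rpow t e) (fun s => x - s) s _ _
    (der_rpow (x - s) e ltac:(lra)) H1) as H2.
  simpl in H2. unfold scal in H2; simpl in H2; unfold mult in H2; simpl in H2.
  replace (- (e * Rpower (x - s) (e - 1))) with (-1 * (e * Rpower (x - s) (e - 1))) by ring.
  exact H2.
Qed.

Lemma cont_rpow_shift x e s : s < x -> continuous (fun s => rpow (x - s) e) s.
Proof.
  intros H. apply (@ex_derive_continuous R_AbsRing R_NormedModule). eexists. apply der_rpow_shift, H.
Qed.

Lemma cont_rpow t e : 0 < t -> continuous (fun t => rpow t e) t.
Proof.
  intros H. apply (@ex_derive_continuous R_AbsRing R_NormedModule). eexists. apply der_rpow, H.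
Qed.

Lemma int_pow_shift x e p q : e <> 0 -> p <= q -> q < x ->
  is_RInt (fun s => rpow (x - s) (e - 1)) p q
    ((Rpower (x - p) e - Rpower (x - q) e) / e).
Proof.
  intros He Hpq Hq.
  assert (Hd : forall s, Rmin p q <= s <= Rmax p q ->
     is_derive (fun s => - rpow (x - s) e / e) s (rpow (x - s) (e - 1))).
  { intros s Hs. rewrite Rmin_left in Hs by lra. rewrite Rmax_right in Hs by lra.
    assert (Hd0 := der_rpow_shift x e s ltac:(lra)).
    apply (is_derive_scal _ s (- / e)) in Hd0.
    replace (rpow (x - s) (e - 1)) with (- / e * - (e * Rpower (x - s) (e - 1)))
      by (rewrite rpow_pos by lra; field; exact He).
    eapply is_derive_ext; [|exact Hd0].
    intros t; simpl. field. exact He. }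
  pose proof (is_RInt_derive _ _ p q Hd) as HI.
  assert (HI2 : is_RInt (fun s => rpow (x - s) (e - 1)) p q
      (minus (- rpow (x - q) e / e) (- rpow (x - p) e / e))).
  { apply HI. intros s Hs. rewrite Rmin_left in Hs by lra. rewrite Rmax_right in Hs by lra.
    apply cont_rpow_shift. lra. }
  unfold minus, plus, opp in HI2; simpl in HI2.
  rewrite !rpow_pos in HI2 by lra.
  replace ((Rpower (x - p) e - Rpower (x - q) e) / e) with
    (- Rpower (x - q) e / e + - (- Rpower (x - p) e / e)) by (field; exact He).
  exact HI2.
Qed.

Lemma int_pow p q e : e <> 0 -> 0 < p <= q ->
  is_RInt (fun t => rpow t (e - 1)) p q ((Rpower q e - Rpower p e) / e).
Proof.
  intros He Hpq.
  assert (Hd : forall s, Rmin p q <= s <= Rmax p q ->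
     is_derive (fun s => rpow s e / e) s (rpow s (e - 1))).
  { intros s Hs. rewrite Rmin_left in Hs by lra. rewrite Rmax_right in Hs by lra.
    assert (Hd0 := der_rpow s e ltac:(lra)).
    apply (is_derive_scal _ s (/ e)) in Hd0.
    replace (rpow s (e - 1)) with (/ e * (e * Rpower s (e - 1)))
      by (rewrite rpow_pos by lra; field; exact He).
    eapply is_derive_ext; [|exact Hd0].
    intros t; simpl. field. exact He. }
  pose proof (is_RInt_derive _ _ p q Hd) as HI.
  assert (HI2 : is_RInt (fun s => rpow s (e - 1)) p q
      (minus (rpow q e / e) (rpow p e / e))).
  { apply HI. intros s Hs. rewrite Rmin_left in Hs by lra. rewrite Rmax_right in Hs by lra.
    apply cont_rpow. lra. }
  unfold minus, plus, opp in HI2; simpl in HI2.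
  rewrite !rpow_pos in HI2 by lra.
  replace ((Rpower q e - Rpower p e) / e) with
    (Rpower q e / e + - (Rpower p e / e)) by (field; exact He).
  exact HI2.
Qed.

Lemma cpt_of_der f x l : is_derive f x l -> continuity_pt f x.
Proof.
  intros H. apply derivable_continuous_pt. exists l. apply is_derive_Reals, H.
Qed.

Lemma cont_of_cpt f x : continuity_pt f x -> continuous f x.
Proof. intros H. apply continuity_pt_filterlim, H. Qed.

Definition gf (z t : R) := rpow t (z - 1) * exp (- t).

Lemma gf_cpt z t : 0 < t -> continuity_pt (gf z) t.
Proof.
  intros H. unfold gf. apply continuity_pt_mult.
  - eapply cpt_of_der, der_rpow, H.
  - apply (continuity_pt_comp (fun t => - t) exp).
    + apply continuity_pt_opp, continuity_pt_id.
    + apply derivable_continuous_pt, derivable_pt_exp.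
Qed.

Lemma gf_ex z p q : 0 < p <= q -> ex_RInt (gf z) p q.
Proof.
  intros H. apply (@ex_RInt_continuous R_CompleteNormedModule). intros s Hs.
  rewrite Rmin_left in Hs by lra. rewrite Rmax_right in Hs by lra.
  apply cont_of_cpt, gf_cpt. lra.
Qed.

Lemma gf_ge0 z t : 0 <= gf z t.
Proof. unfold gf. apply Rmult_le_pos. apply rpow_ge0. left; apply exp_pos. Qed.

Lemma gf_mono z p' p q q' : 0 < p' <= p -> p <= q -> q <= q' ->
  RInt (gf z) p q <= RInt (gf z) p' q'.
Proof.
  intros H1 H2 H3.
  rewrite <- (RInt_Chasles (gf z) p' p q') by (apply gf_ex; lra).
  rewrite <- (RInt_Chasles (gf z) p q q') by (apply gf_ex; lra).
  unfold plus; simpl.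
  assert (0 <= RInt (gf z) p' p) by (apply RInt_ge_0; [lra|apply gf_ex; lra|intros; apply gf_ge0]).
  assert (0 <= RInt (gf z) q q') by (apply RInt_ge_0; [lra|apply gf_ex; lra|intros; apply gf_ge0]).
  lra.
Qed.

Lemma int_texp p q : is_RInt (fun t => t * exp (- t)) p q
   (- (q + 1) * exp (- q) - (- (p + 1) * exp (- p))).
Proof.
  assert (Hd : forall s, Rmin p q <= s <= Rmax p q ->
     is_derive (fun s => - (s + 1) * exp (- s)) s (s * exp (- s))).
  { intros s _. auto_derive; auto. ring. }
  pose proof (is_RInt_derive _ _ p q Hd) as HI.
  apply HI. intros s _. apply cont_of_cpt. apply continuity_pt_mult.
  apply continuity_pt_id.
  apply (continuity_pt_comp (fun t => - t) exp).
  + apply continuity_pt_opp, continuity_pt_id.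
  + apply derivable_continuous_pt, derivable_pt_exp.
Qed.

Lemma gf_bound z p q : 0 < z <= 2 -> 0 < p <= 1 -> 1 <= q ->
  RInt (gf z) p q <= / z + 2.
Proof.
  intros Hz Hp Hq.
  rewrite <- (RInt_Chasles (gf z) p 1 q) by (apply gf_ex; lra).
  unfold plus; simpl.
  assert (H1 : RInt (gf z) p 1 <= / z).
  { pose proof (int_pow p 1 z ltac:(lra) ltac:(lra)) as HI.
    apply Rle_trans with (RInt (fun t => rpow t (z - 1)) p 1).
    apply RInt_le. lra. apply gf_ex; lra. eexists; exact HI.
    intros t Ht. unfold gf.
    rewrite <- (Rmult_1_r (rpow t (z - 1))) at 2.
    apply Rmult_le_compat_l. apply rpow_ge0.
    rewrite <- exp_0. left. apply exp_increasing. lra.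
    rewrite (is_RInt_unique _ _ _ _ HI).
    replace (Rpower 1 z) with 1 by (unfold Rpower; rewrite ln_1, Rmult_0_r, exp_0; reflexivity).
    pose proof (Rpower_pos p z).
    apply (Rmult_le_reg_r z). lra. field_simplify; lra. }
  assert (H2 : RInt (gf z) 1 q <= 2).
  { pose proof (int_texp 1 q) as HI.
    apply Rle_trans with (RInt (fun t => t * exp (- t)) 1 q).
    apply RInt_le. lra. apply gf_ex; lra. eexists; exact HI.
    intros t Ht. unfold gf. apply Rmult_le_compat_r. left; apply exp_pos.
    rewrite rpow_pos by lra. rewrite <- (Rpower_1 t) at 2 by lra.
    apply Rle_Rpower; lra.
    rewrite (is_RInt_unique _ _ _ _ HI).
    pose proof (exp_pos (- q)).
    assert (exp (- 1) <= 1) by (rewrite <- exp_0; left; apply exp_increasing; lra).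
    assert (0 <= (q + 1) * exp (- q)) by (apply Rmult_le_pos; lra).
    replace (- (1)) with (-1) by ring. nra. }
  lra.
Qed.

Lemma gf_lower z : 0 < z -> 0 < RInt (gf z) 1 2.
Proof.
  intros Hz.
  pose proof (int_pow 1 2 z ltac:(lra) ltac:(lra)) as HI.
  assert (HI2 : is_RInt (fun y => exp (-2) * rpow y (z - 1)) 1 2
     (exp (-2) * ((Rpower 2 z - Rpower 1 z) / z))) by
    (apply (is_RInt_scal _ _ _ (exp (-2)) _ HI)).
  apply Rlt_le_trans with (exp (-2) * ((Rpower 2 z - Rpower 1 z) / z)).
  - 
    apply Rmult_lt_0_compat. apply exp_pos.
    assert (Rpower 1 z < Rpower 2 z).
    {
      unfold Rpower. rewrite ln_1, Rmult_0_r, exp_0. rewrite <- exp_0.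
      apply exp_increasing. apply Rmult_lt_0_compat. lra.
      rewrite <- ln_1. apply ln_increasing; lra. }
    unfold Rdiv. apply Rmult_lt_0_compat. lra. apply Rinv_0_lt_compat, Hz.
  - rewrite <- (is_RInt_unique _ _ _ _ HI2).
    apply RInt_le. lra. eexists; exact HI2. apply gf_ex; lra.
    intros t Ht. unfold gf.
    rewrite Rmult_comm. apply Rmult_le_compat_l. apply rpow_ge0.
    left. apply exp_increasing. lra.
Qed.

Definition GE (z y : R) := exists p q, 0 < p <= 1 /\ 1 <= q /\ y = RInt (gf z) p q.

Lemma gamma_approx z : 0 < z <= 2 -> exists l, 0 < l /\
  forall eps, 0 < eps -> exists p0 q0, 0 < p0 <= 1 /\ 1 <= q0 /\
    forall p q, 0 < p <= p0 -> q0 <= q -> Rabs (RInt (gf z) p q - l) < eps.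
Proof.
  intros Hz.
  assert (Hb : bound (GE z)).
  { exists (/ z + 2). intros y [p [q [Hp [Hq ->]]]]. apply gf_bound; auto. }
  assert (Hne : exists y, GE z y).
  { exists (RInt (gf z) 1 1). exists 1, 1. repeat split; lra. }
  destruct (completeness _ Hb Hne) as [l [Hub Hlub]].
  exists l. split.
  - apply Rlt_le_trans with (RInt (gf z) 1 2). apply gf_lower; lra.
    apply Hub. exists 1, 2. repeat split; lra.
  - intros eps Heps.
    destruct (Rlt_le_dec (l - eps) l) as [_|]; [|lra].
    assert (Hex : exists y, GE z y /\ l - eps < y).
    { apply NNPP. intros Hn. assert (l <= l - eps); [|lra].
      apply Hlub. intros y Hy. apply Rnot_lt_le. intros Hlt. apply Hn. exists y; auto. }
    destruct Hex as [y [[p0 [q0 [Hp0 [Hq0 ->]]]] Hy]].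
    exists p0, q0. repeat split; try lra.
    intros p q Hp Hq.
    assert (RInt (gf z) p0 q0 <= RInt (gf z) p q) by (apply gf_mono; lra).
    assert (RInt (gf z) p q <= l) by (apply Hub; exists p, q; repeat split; lra).
    apply Rabs_def1; lra.
Qed.

Lemma small_pow a eps : 0 < a -> 0 < eps -> exists d, 0 < d /\
  forall y, 0 < y < d -> Rpower y a < eps.
Proof.
  intros Ha He. exists (Rpower eps (/ a)). split. apply Rpower_pos.
  intros y Hy. apply Rlt_le_trans with (Rpower (Rpower eps (/ a)) a).
  apply Rlt_Rpower_l; lra.
  rewrite Rpower_mult. replace (/ a * a) with 1 by (field; lra).
  rewrite Rpower_1 by lra. lra.
Qed.

Lemma zero_of_small d : (forall eps, 0 < eps -> Rabs d < eps) -> d = 0.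
Proof.
  intros H. destruct (Req_dec d 0) as [|Hn]; auto.
  specialize (H (Rabs d) (Rabs_pos_lt _ Hn)). lra.
Qed.

Lemma Gamma_eq z l : 0 < z <= 2 ->
  (forall eps, 0 < eps -> exists p0 q0, 0 < p0 <= 1 /\ 1 <= q0 /\
    forall p q, 0 < p <= p0 -> q0 <= q -> Rabs (RInt (gf z) p q - l) < eps) ->
  Gamma z = l.
Proof.
  intros Hz Hl. unfold Gamma.
  apply is_RInt_gen_unique.
  apply filterlimi_locally. intros eps.
  destruct (Hl eps (cond_pos eps)) as [p0 [q0 [Hp0 [Hq0 Hpq]]]].
  apply (Filter_prod _ _ _ (fun p => 0 < p <= p0) (fun q => q0 < q)).
  - exists (mkposreal p0 (proj1 Hp0)). intros y Hy Hy0. simpl in Hy.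
    unfold ball in Hy; simpl in Hy; unfold AbsRing_ball, abs, minus, plus, opp in Hy; simpl in Hy.
    apply Rabs_def2 in Hy. lra.
  - exists q0. intros x Hx. exact Hx.
  - intros p q Hp Hq. simpl. exists (RInt (gf z) p q). split.
    + apply (RInt_correct (gf z)). apply gf_ex. lra.
    + unfold ball; simpl; unfold AbsRing_ball, abs, minus, plus, opp; simpl.
      apply Hpq; lra.
Qed.

Lemma is_derive_eq' (f : R -> R) x l l' : is_derive f x l -> l = l' -> is_derive f x l'.
Proof. intros H ->; exact H. Qed.

Lemma by_parts a p q : 0 < a -> 0 < p <= q ->
  RInt (gf (a + 1)) p q = Rpower p a * exp (- p) - Rpower q a * exp (- q) + a * RInt (gf a) p q.
Proof.
  intros Ha Hpq.
  assert (Hd : forall s, Rmin p q <= s <= Rmax p q ->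
     is_derive (fun s => rpow s a * exp (- s)) s (a * gf a s - gf (a + 1) s)).
  { intros s Hs. rewrite Rmin_left in Hs by lra. rewrite Rmax_right in Hs by lra.
    assert (H1 := der_rpow s a ltac:(lra)).
    assert (H2 : is_derive (fun s => exp (- s)) s (- exp (- s))).
    { auto_derive; auto; ring. }
    pose proof (is_derive_mult _ _ s _ _ H1 H2 ltac:(intros; apply Rmult_comm)) as H3.
    eapply is_derive_eq'. exact H3.
    unfold gf, plus, mult; simpl. rewrite !rpow_pos by lra.
    replace (a + 1 - 1) with a by ring. ring. }
  pose proof (is_RInt_derive _ _ p q Hd) as HI.
  assert (HI2 : is_RInt (fun s => a * gf a s - gf (a + 1) s) p q
     (rpow q a * exp (- q) - rpow p a * exp (- p))).
  { apply HI. intros s Hs. rewrite Rmin_left in Hs by lra. rewrite Rmax_right in Hs by lra.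
    apply cont_of_cpt. apply continuity_pt_minus. apply continuity_pt_scal.
    apply gf_cpt; lra. apply gf_cpt; lra. }
  assert (Ha1 := RInt_correct (gf a) p q (gf_ex a p q Hpq)).
  assert (Ha2 := RInt_correct (gf (a+1)) p q (gf_ex (a+1) p q Hpq)).
  assert (HI3 : is_RInt (fun s => a * gf a s - gf (a + 1) s) p q
     (a * RInt (gf a) p q - RInt (gf (a+1)) p q)).
  { apply (is_RInt_minus (fun s => a * gf a s) (gf (a+1))).
    apply (is_RInt_scal (gf a) p q a). exact Ha1. exact Ha2. }
  assert (E := is_RInt_unique _ _ _ _ HI2). rewrite (is_RInt_unique _ _ _ _ HI3) in E.
  rewrite !rpow_pos in E by lra. lra.
Qed.

Lemma qexp_small q : 1 <= q -> q * exp (- q) < 4 / q.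
Proof.
  intros Hq.
  assert (H1 : q / 2 < exp (q / 2)).
  { pose proof (exp_ineq1 (q / 2) ltac:(lra)). lra. }
  assert (H2 : exp q = exp (q / 2) * exp (q / 2)) by (rewrite <- exp_plus; f_equal; field).
  rewrite exp_Ropp.
  assert (0 < exp (q/2)) by apply exp_pos.
  assert (q * q < 4 * exp q) by (rewrite H2; nra).
  assert (0 < exp q) by apply exp_pos.
  apply (Rmult_lt_reg_r (q * exp q)). nra.
  field_simplify; try lra. 
Qed.

Lemma Gamma_facts a : 0 < a < 1 -> 0 < Gamma a /\ Gamma (a + 1) = a * Gamma a.
Proof.
  intros Ha.
  destruct (gamma_approx a ltac:(lra)) as [l0 [Hl0 A0]].
  destruct (gamma_approx (a + 1) ltac:(lra)) as [l1 [Hl1 A1]].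
  rewrite (Gamma_eq a l0 ltac:(lra) A0), (Gamma_eq (a + 1) l1 ltac:(lra) A1).
  split; [exact Hl0|].
  apply Rminus_diag_uniq. apply zero_of_small. intros eps He.
  set (e := eps / 5).
  assert (He' : 0 < e) by (unfold e; lra).
  destruct (A0 e He') as [p0 [q0 [Hp0 [Hq0 B0]]]].
  destruct (A1 e He') as [p1 [q1 [Hp1 [Hq1 B1]]]].
  destruct (small_pow a e ltac:(lra) He') as [d [Hd Bd]].
  set (p := Rmin (Rmin p0 p1) (d / 2)).
  set (q := Rmax (Rmax q0 q1) (4 / e + 1)).
  assert (Hp : 0 < p /\ p <= p0 /\ p <= p1 /\ p < d).
  { unfold p. repeat split.
    - apply Rmin_glb_lt. apply Rmin_glb_lt; lra. lra.
    - apply Rle_trans with (Rmin p0 p1). apply Rmin_l. apply Rmin_l.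
    - apply Rle_trans with (Rmin p0 p1). apply Rmin_l. apply Rmin_r.
    - apply Rle_lt_trans with (d/2). apply Rmin_r. lra. }
  assert (Hq : q0 <= q /\ q1 <= q /\ 4 / e + 1 <= q).
  { unfold q. repeat split.
    - apply Rle_trans with (Rmax q0 q1). apply Rmax_l. apply Rmax_l.
    - apply Rle_trans with (Rmax q0 q1). apply Rmax_r. apply Rmax_l.
    - apply Rmax_r. }
  assert (H0 := B0 p q ltac:(lra) ltac:(lra)).
  assert (H1 := B1 p q ltac:(lra) ltac:(lra)).
  assert (HB := by_parts a p q ltac:(lra) ltac:(lra)).
  assert (Hpa : Rpower p a * exp (- p) < e).
  { apply Rle_lt_trans with (Rpower p a).
    rewrite <- (Rmult_1_r (Rpower p a)) at 2. apply Rmult_le_compat_l.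
    left; apply Rpower_pos. rewrite <- exp_0; left; apply exp_increasing; lra.
    apply Bd. lra. }
  assert (Hqa : Rpower q a * exp (- q) < e).
  { assert (4/e > 0) by (apply Rdiv_lt_0_compat; lra).
    apply Rle_lt_trans with (q * exp (- q)).
    apply Rmult_le_compat_r. left; apply exp_pos.
    rewrite <- (Rpower_1 q) at 2 by lra. apply Rle_Rpower; lra.
    apply Rlt_le_trans with (4 / q). apply qexp_small. lra.
    apply (Rmult_le_reg_r (q / e)). apply Rdiv_lt_0_compat; lra.
    field_simplify; try lra. }
  assert (0 <= Rpower p a * exp (- p)) by (left; apply Rmult_lt_0_compat; [apply Rpower_pos|apply exp_pos]).
  assert (0 <= Rpower q a * exp (- q)) by (left; apply Rmult_lt_0_compat; [apply Rpower_pos|apply exp_pos]).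
  apply Rabs_def2 in H0. apply Rabs_def2 in H1.
  apply Rabs_def1; unfold e in *; nra.
Qed.

Definition clamp (y : R) := Rmax 0 (Rmin 1 y).

Lemma clamp_I01 y : I01 (clamp y).
Proof. unfold clamp, I01, Rmax, Rmin. repeat destruct Rle_dec; lra. Qed.

Lemma clamp_id y : I01 y -> clamp y = y.
Proof. unfold clamp, I01, Rmax, Rmin. repeat destruct Rle_dec; lra. Qed.

Lemma clamp_lip y z : Rabs (clamp z - clamp y) <= Rabs (z - y).
Proof.
  unfold clamp, Rmax, Rmin. repeat destruct Rle_dec;
  unfold Rabs; repeat destruct Rcase_abs; lra.
Qed.

Lemma dw_lip F dF y : derive_within I01 F y dF -> exists d, 0 < d /\
  forall z, I01 z -> Rabs (z - y) < d -> Rabs (F z - F y) <= (Rabs dF + 1) * Rabs (z - y).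
Proof.
  intros H. destruct (H 1 ltac:(lra)) as [d [Hd Hz]]. exists d. split; auto.
  intros z Iz Hzy. specialize (Hz z Iz Hzy).
  replace (F z - F y) with ((F z - F y - dF * (z - y)) + dF * (z - y)) by ring.
  eapply Rle_trans. apply Rabs_triang. rewrite Rabs_mult. lra.
Qed.

Lemma lip_cpt f y C d : 0 < d ->
  (forall z, Rabs (z - y) < d -> Rabs (f z - f y) <= C * Rabs (z - y)) ->
  continuity_pt f y.
Proof.
  intros Hd H. unfold continuity_pt, continue_in, limit1_in, limit_in.
  intros eps He. exists (Rmin d (eps / (Rabs C + 1))). split.
  - apply Rmin_glb_lt; auto. apply Rdiv_lt_0_compat; auto. pose proof (Rabs_pos C); lra.
  - intros z [_ Hz]. simpl in *. unfold R_dist in *.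
    assert (Hz1 : Rabs (z - y) < d) by (eapply Rlt_le_trans; [exact Hz|apply Rmin_l]).
    assert (Hz2 : Rabs (z - y) < eps / (Rabs C + 1)) by (eapply Rlt_le_trans; [exact Hz|apply Rmin_r]).
    specialize (H z Hz1).
    assert (HC : C <= Rabs C) by apply Rle_abs.
    pose proof (Rabs_pos C). pose proof (Rabs_pos (z - y)).
    apply Rle_lt_trans with ((Rabs C + 1) * Rabs (z - y)). nra.
    apply (Rmult_lt_reg_r (/ (Rabs C + 1))). apply Rinv_0_lt_compat; lra.
    rewrite Rmult_comm, <- Rmult_assoc, Rinv_l, Rmult_1_l by lra. exact Hz2.
Qed.

Lemma gx_cpt g g1 y : (forall y, I01 y -> derive_within I01 g y (g1 y)) ->
  continuity_pt (fun y => g (clamp y)) y.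
Proof.
  intros Hg. destruct (dw_lip _ _ _ (Hg (clamp y) (clamp_I01 y))) as [d [Hd Hl]].
  apply lip_cpt with (Rabs (g1 (clamp y)) + 1) d; auto.
  intros z Hz. pose proof (clamp_lip y z).
  eapply Rle_trans. apply Hl. apply clamp_I01. lra.
  apply Rmult_le_compat_l. pose proof (Rabs_pos (g1 (clamp y))); lra. exact H.
Qed.

Lemma dw_interior F dF y : derive_within I01 F y dF -> 0 < y < 1 ->
  derivable_pt_lim F y dF.
Proof.
  intros H Hy eps He.
  destruct (H (eps / 2) ltac:(lra)) as [d [Hd Hz]].
  assert (Hm : 0 < Rmin d (Rmin y (1 - y))).
  { apply Rmin_glb_lt; auto. apply Rmin_glb_lt; lra. }
  exists (mkposreal _ Hm). intros h Hh0 Hh. simpl in Hh.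
  assert (H1 : Rabs h < d) by (eapply Rlt_le_trans; [exact Hh|apply Rmin_l]).
  assert (H2 : Rabs h < Rmin y (1 - y)) by (eapply Rlt_le_trans; [exact Hh|apply Rmin_r]).
  assert (H3 : Rabs h < y) by (eapply Rlt_le_trans; [exact H2|apply Rmin_l]).
  assert (H4 : Rabs h < 1 - y) by (eapply Rlt_le_trans; [exact H2|apply Rmin_r]).
  apply Rabs_def2 in H3. apply Rabs_def2 in H4.
  assert (I : I01 (y + h)) by (unfold I01; lra).
  specialize (Hz (y + h) I). replace (y + h - y) with h in Hz by ring.
  specialize (Hz H1).
  assert (Hh' : 0 < Rabs h) by (apply Rabs_pos_lt; auto).
  replace ((F (y + h) - F y) / h - dF) with ((F (y + h) - F y - dF * h) / h) by (field; auto).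
  unfold Rdiv. rewrite Rabs_mult, Rabs_inv.
  apply Rle_lt_trans with (eps / 2 * Rabs h * / Rabs h).
  apply Rmult_le_compat_r. left; apply Rinv_0_lt_compat; auto. exact Hz.
  field_simplify; lra.
Qed.

Lemma rolle' f df a b : a < b ->
  (forall x, a < x < b -> derivable_pt_lim f x (df x)) ->
  (forall x, a <= x <= b -> continuity_pt f x) -> f a = f b ->
  exists c, a < c < b /\ df c = 0.
Proof.
  intros Hab Hd Hc Hf.
  set (pr := fun x (H : a < x < b) => exist (fun l => derivable_pt_lim f x l) (df x) (Hd x H)).
  destruct (Rolle f a b pr Hc Hab Hf) as [c [P Hc0]].
  exists c. split; auto.
Qed.

Lemma cpt_of_der_P4 f x l : is_derive f x l -> continuity_pt f x.
Proof. intros H. apply derivable_continuous_pt. exists l. apply is_derive_Reals, H. Qed.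

Lemma interp_err g g1 g2 Mu p q s :
  (forall y, I01 y -> derive_within I01 g y (g1 y)) ->
  (forall y, I01 y -> derive_within I01 g1 y (g2 y)) ->
  (forall y, I01 y -> Rabs (g2 y) <= Mu) ->
  0 <= p -> q <= 1 -> p < q -> p <= s <= q ->
  Rabs (g s - (g p * (q - s) + g q * (s - p)) / (q - p)) <= Mu / 2 * ((s - p) * (q - s)).
Proof.
  intros Hg Hg1 Hg2 Hp Hq Hpq Hs.
  assert (HMu : 0 <= Mu) by (eapply Rle_trans; [apply Rabs_pos|apply (Hg2 p); unfold I01; lra]).
  destruct (Req_dec s p) as [->|Hsp].
  { replace (g p - (g p * (q - p) + g q * (p - p)) / (q - p)) with 0 by (field; lra).
    rewrite Rabs_R0. replace (p - p) with 0 by ring. lra. }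
  destruct (Req_dec s q) as [->|Hsq].
  { replace (g q - (g p * (q - q) + g q * (q - p)) / (q - p)) with 0 by (field; lra).
    rewrite Rabs_R0. replace (q - q) with 0 by ring. lra. }
  set (gx := fun y => g (clamp y)).
  assert (Egp : gx p = g p) by (unfold gx; rewrite clamp_id; auto; unfold I01; lra).
  assert (Egq : gx q = g q) by (unfold gx; rewrite clamp_id; auto; unfold I01; lra).
  assert (Egs : gx s = g s) by (unfold gx; rewrite clamp_id; auto; unfold I01; lra).
  set (K := (g s - (g p * (q - s) + g q * (s - p)) / (q - p)) / ((s - p) * (s - q))).
  set (P := fun y => (g p * (q - y) + g q * (y - p)) / (q - p) + K * (y - p) * (y - q)).
  set (phi := fun y => gx y - P y).
  set (dphi := fun y => g1 y - ((g q - g p) / (q - p) + K * ((y - q) + (y - p)))).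
  assert (HdP : forall y, is_derive P y ((g q - g p) / (q - p) + K * ((y - q) + (y - p)))).
  { intros y. unfold P. auto_derive; auto. field. lra. }
  assert (Hdphi : forall y, 0 < y < 1 -> derivable_pt_lim phi y (dphi y)).
  { intros y Hy. unfold phi, dphi. apply derivable_pt_lim_minus.
    - apply dw_interior; auto. intros eps He. destruct (Hg y ltac:(unfold I01; lra) eps He) as [d [Hd Hz]].
      exists d. split; auto. intros z Iz Hzy. unfold gx. rewrite !clamp_id; auto. unfold I01; lra.
    - apply is_derive_Reals, HdP. }
  assert (Hcphi : forall y, continuity_pt phi y).
  { intros y. unfold phi. apply continuity_pt_minus. apply (gx_cpt g g1 y Hg).
    eapply cpt_of_der_P4. apply HdP. }
  assert (Hsps : (s - p) * (s - q) <> 0).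
  { apply Rmult_integral_contrapositive. split; lra. }
  assert (Pp : phi p = 0) by (unfold phi, P; rewrite Egp; field; lra).
  assert (Pq : phi q = 0) by (unfold phi, P; rewrite Egq; field; lra).
  assert (Ps : phi s = 0) by (unfold phi, P, K; rewrite Egs; field; split; lra).
  destruct (rolle' phi dphi p s ltac:(lra)) as [c1 [Hc1 Dc1]].
  { intros y Hy. apply Hdphi. lra. }
  { intros y _. apply Hcphi. }
  { congruence. }
  destruct (rolle' phi dphi s q ltac:(lra)) as [c2 [Hc2 Dc2]].
  { intros y Hy. apply Hdphi. lra. }
  { intros y _. apply Hcphi. }
  { congruence. }
  assert (Hdd : forall y, 0 < y < 1 -> derivable_pt_lim dphi y (g2 y - 2 * K)).
  { intros y Hy. unfold dphi.
    replace (g2 y - 2 * K) with (g2 y - (0 + K * (1 + 1))) by ring.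
    apply derivable_pt_lim_minus. apply dw_interior; auto. apply Hg1. unfold I01; lra.
    apply is_derive_Reals. auto_derive; auto. ring. }
  destruct (rolle' dphi (fun y => g2 y - 2 * K) c1 c2 ltac:(lra)) as [xi [Hxi Dxi]].
  { intros y Hy. apply Hdd. lra. }
  { intros y Hy. apply derivable_continuous_pt. exists (g2 y - 2 * K). apply Hdd. lra. }
  { congruence. }
  assert (HK : Rabs K <= Mu / 2).
  { replace K with (g2 xi / 2) by lra. unfold Rdiv. rewrite Rabs_mult.
    rewrite (Rabs_pos_eq (/2)) by lra. apply Rmult_le_compat_r. lra.
    apply Hg2. unfold I01; lra. }
  replace (g s - (g p * (q - s) + g q * (s - p)) / (q - p)) with (K * ((s - p) * (s - q)))
    by (unfold K; field; split; lra).
  rewrite Rabs_mult. rewrite (Rabs_left1 ((s - p) * (s - q))) by nra.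
  replace (- ((s - p) * (s - q))) with ((s - p) * (q - s)) by ring.
  apply Rmult_le_compat_r. nra. exact HK.
Qed.

Lemma is_RInt_eq' (f : R -> R) a b l l' : is_RInt f a b l -> l = l' -> is_RInt f a b l'.
Proof. intros H ->; exact H. Qed.

Lemma Rabs_le_bw u v : Rabs u <= v -> - v <= u <= v.
Proof. unfold Rabs; destruct Rcase_abs; lra. Qed.

Lemma core_interval g g1 g2 Mu x a p q b :
  (forall y, I01 y -> derive_within I01 g y (g1 y)) ->
  (forall y, I01 y -> derive_within I01 g1 y (g2 y)) ->
  (forall y, I01 y -> Rabs (g2 y) <= Mu) ->
  0 < a < 1 -> 0 <= p -> p < q -> q <= 1 -> p <= b <= q -> b < x ->
  let A := (g p * (q - x) + g q * (x - p)) / (q - p) in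
  let B := (g p - g q) / (q - p) in
  exists V, is_RInt (fun s => rpow (x - s) (1 - (2 - a)) * g s) p b V /\
   Rabs (V - (A * ((Rpower (x - p) a - Rpower (x - b) a) / a)
              + B * ((Rpower (x - p) (a + 1) - Rpower (x - b) (a + 1)) / (a + 1))))
   <= Mu / 8 * (q - p) ^ 2 * ((Rpower (x - p) a - Rpower (x - b) a) / a).
Proof.
  intros Hg Hg1 Hg2 Ha Hp Hpq Hq Hb Hbx A B.
  replace (1 - (2 - a)) with (a - 1) by ring.
  set (k := fun s => rpow (x - s) (a - 1)).
  assert (Ik := int_pow_shift x a p b ltac:(lra) ltac:(lra) Hbx).
  assert (Ik1 := int_pow_shift x (a + 1) p b ltac:(lra) ltac:(lra) Hbx).
  replace (a + 1 - 1) with a in Ik1 by ring.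
  set (Kv := (Rpower (x - p) a - Rpower (x - b) a) / a) in *.
  set (K1v := (Rpower (x - p) (a + 1) - Rpower (x - b) (a + 1)) / (a + 1)) in *.
  set (gx := fun y => g (clamp y)).
  assert (Hex : ex_RInt (fun s => k s * gx s) p b).
  { apply (@ex_RInt_continuous R_CompleteNormedModule). intros s Hs.
    rewrite Rmin_left in Hs by lra. rewrite Rmax_right in Hs by lra.
    apply continuity_pt_filterlim. apply continuity_pt_mult.
    apply continuity_pt_filterlim. apply cont_rpow_shift. lra.
    apply (gx_cpt g g1 s Hg). }
  set (V := RInt (fun s => k s * gx s) p b).
  assert (HV : is_RInt (fun s => k s * g s) p b V).
  { apply is_RInt_ext with (fun s => k s * gx s).
    intros s Hs. rewrite Rmin_left in Hs by lra. rewrite Rmax_right in Hs by lra.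
    unfold gx. rewrite clamp_id; auto. unfold I01; lra.
    apply (RInt_correct (fun s => k s * gx s)), Hex. }
  exists V. split; [exact HV|].
  assert (HL : is_RInt (fun s => A * k s + B * rpow (x - s) a) p b (A * Kv + B * K1v)).
  { apply (is_RInt_plus (fun s => A * k s) (fun s => B * rpow (x - s) a)).
    apply (is_RInt_scal k p b A). exact Ik.
    apply (is_RInt_scal (fun s => rpow (x - s) a) p b B). exact Ik1. }
  assert (HE : is_RInt (fun s => k s * g s - (A * k s + B * rpow (x - s) a)) p b
                 (V - (A * Kv + B * K1v))).
  { apply (is_RInt_minus (fun s => k s * g s) (fun s => A * k s + B * rpow (x - s) a)); auto. }
  set (c := Mu / 8 * (q - p) ^ 2).
  assert (Hc : is_RInt (fun s => c * k s) p b (c * Kv)).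
  { apply (is_RInt_scal k p b c). exact Ik. }
  assert (Hmc : is_RInt (fun s => - (c * k s)) p b (- (c * Kv))).
  { apply (is_RInt_opp (fun s => c * k s)). exact Hc. }
  assert (Hpt : forall s, p < s < b ->
     Rabs (k s * g s - (A * k s + B * rpow (x - s) a)) <= c * k s).
  { intros s Hs.
    assert (Hxs : 0 < x - s) by lra.
    assert (Eq : k s * g s - (A * k s + B * rpow (x - s) a) =
        k s * (g s - (g p * (q - s) + g q * (s - p)) / (q - p))).
    { unfold k. rewrite !rpow_pos by lra.
      replace (Rpower (x - s) a) with (Rpower (x - s) (a - 1) * (x - s)).
      unfold A, B. field. lra.
      replace a with ((a - 1) + 1) at 2 by ring. rewrite Rpower_plus, Rpower_1 by lra. reflexivity. }
    rewrite Eq, Rabs_mult, (Rabs_pos_eq (k s)) by apply rpow_ge0.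
    rewrite (Rmult_comm c). apply Rmult_le_compat_l. apply rpow_ge0.
    eapply Rle_trans. apply (interp_err g g1 g2 Mu p q s); auto; lra.
    unfold c. assert (0 <= Mu) by (eapply Rle_trans; [apply Rabs_pos|apply (Hg2 p); unfold I01; lra]).
    assert ((s - p) * (q - s) <= (q - p) ^ 2 / 4) by (pose proof (pow2_ge_0 (q + p - 2 * s)); nra).
    replace (Mu / 8 * (q - p) ^ 2) with (Mu / 2 * ((q - p) ^ 2 / 4)) by field.
    apply Rmult_le_compat_l; lra. }
  assert (H1 := is_RInt_le _ _ p b _ _ ltac:(lra) HE Hc ltac:(intros s Hs; specialize (Hpt s Hs); apply Rabs_le_bw in Hpt; lra)).
  assert (H2 := is_RInt_le _ _ p b _ _ ltac:(lra) Hmc HE ltac:(intros s Hs; specialize (Hpt s Hs); apply Rabs_le_bw in Hpt; lra)).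
  apply Rabs_le. lra.
Qed.

Lemma rpow_mul u v e : 0 <= u -> 0 < v -> rpow (u * v) e = rpow u e * rpow v e.
Proof.
  intros Hu Hv. destruct (Req_dec u 0) as [->|Hu'].
  - rewrite Rmult_0_l, !rpow_nonpos by lra. ring.
  - rewrite !rpow_pos by nra. rewrite Rpower_mult_distr by lra. reflexivity.
Qed.

Lemma rpow_succ h a : 0 < h -> rpow h (a + 1) = rpow h a * h.
Proof. intros H. rewrite !rpow_pos by lra. rewrite Rpower_plus, Rpower_1 by lra. reflexivity. Qed.

Lemma ident beta (g : R -> R) h r j : 0 < h -> 1 < beta < 2 -> (1 <= j <= r)%nat ->
  let a := 2 - beta in let x := INR r * h in
  let p := INR (j - 1) * h in let q := INR j * h in
  let A := (g p * (q - x) + g q * (x - p)) / (q - p) in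
  let B := (g p - g q) / (q - p) in
  A * ((rpow (x - p) a - rpow (x - q) a) / a)
  + B * ((rpow (x - p) (a + 1) - rpow (x - q) (a + 1)) / (a + 1))
  = rpow h a * (wt0 beta j r * g q - wt1 beta (j - 1) r * g p).
Proof.
  intros Hh Hb Hj a x p q A B.
  set (m := (r - j + 1)%nat).
  assert (Em : INR r = INR m + INR (j - 1)).
  { rewrite <- plus_INR. f_equal. unfold m. lia. }
  assert (Ej : INR j = INR (j - 1) + 1).
  { rewrite <- S_INR. f_equal. lia. }
  assert (Hm1 : 1 <= INR m). { replace 1 with (INR 1) by reflexivity. apply le_INR. unfold m; lia. }
  assert (Exp : x - p = INR m * h) by (unfold x, p; rewrite Em; ring).
  assert (Exq : x - q = (INR m - 1) * h) by (unfold x, q; rewrite Em, Ej; ring).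
  assert (Eqp : q - p = h) by (unfold q, p; rewrite Ej; ring).
  unfold A, B. rewrite Exp, Exq, Eqp.
  replace (q - x) with (- ((INR m - 1) * h)) by lra.
  rewrite !rpow_mul by lra.
  rewrite !(rpow_succ h a Hh).
  destruct j as [|j']; [lia|].
  replace (S j' - 1)%nat with j' by lia.
  unfold wt0, wt1.
  replace (Nat.eqb j' r) with false by (symmetry; apply Nat.eqb_neq; lia).
  replace (r - j')%nat with m by (unfold m; lia).
  fold m.
  unfold cc. replace (3 - beta) with (a + 1) by (unfold a; ring). fold a.
  assert (a <> 0) by (unfold a; lra). assert (a + 1 <> 0) by (unfold a; lra).
  field. repeat split; lra.
Qed.

Definition Tj beta (g : R -> R) h r j :=
  rpow h (2 - beta) * (wt0 beta j r * g (INR j * h) - wt1 beta (j - 1) r * g (INR (j - 1) * h)).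

Fixpoint Tsum beta g h r n :=
  match n with O => 0 | S n' => Tsum beta g h r n' + Tj beta g h r (S n') end.

Lemma sum_w beta (g : R -> R) h r n :
  rpow h (2 - beta) * sum_f_R0 (fun j => w beta j r * g (INR j * h)) n
  = Tsum beta g h r n - rpow h (2 - beta) * wt1 beta n r * g (INR n * h).
Proof.
  induction n as [|n IH].
  - simpl. unfold w, wt0. ring.
  - cbn [sum_f_R0 Tsum]. rewrite Rmult_plus_distr_l, IH. unfold Tj, w.
    replace (S n - 1)%nat with n by lia. ring.
Qed.

Lemma acc beta g g1 g2 Mu N r :
  (forall y, I01 y -> derive_within I01 g y (g1 y)) ->
  (forall y, I01 y -> derive_within I01 g1 y (g2 y)) ->
  (forall y, I01 y -> Rabs (g2 y) <= Mu) ->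
  1 < beta < 2 -> (0 < N)%nat -> (1 <= r <= N - 1)%nat ->
  forall n, (n <= r - 1)%nat ->
  exists V, is_RInt (fun s => rpow (INR r * / INR N - s) (1 - beta) * g s) 0 (INR n * / INR N) V /\
   Rabs (V - Tsum beta g (/ INR N) r n) <=
   Mu / 8 * (/ INR N) ^ 2 * ((Rpower (INR r * / INR N) (2 - beta)
                  - Rpower (INR r * / INR N - INR n * / INR N) (2 - beta)) / (2 - beta)).
Proof.
  intros Hg Hg1 Hg2 Hb HN Hr.
  set (h := / INR N). set (x := INR r * h).
  assert (HN' : 0 < INR N) by (apply lt_0_INR; lia).
  assert (Hh : 0 < h) by (apply Rinv_0_lt_compat; lra).
  assert (Hxn : forall n, (n <= N)%nat -> INR n * h <= 1).
  { intros n Hn. unfold h. apply (Rmult_le_reg_r (INR N)); auto.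
    rewrite Rmult_assoc, Rinv_l, Rmult_1_r, Rmult_1_l by lra. apply le_INR; lia. }
  assert (Hlt : forall n m, (n < m)%nat -> INR n * h < INR m * h).
  { intros n m Hnm. apply Rmult_lt_compat_r; auto. apply lt_INR; lia. }
  induction n as [|n IH]; intros Hn.
  - exists 0. split.
    + simpl. rewrite Rmult_0_l. apply (is_RInt_point (V := R_NormedModule)).
    + simpl Tsum. simpl INR. rewrite Rmult_0_l, Rminus_0_r, Rminus_0_r, Rminus_eq_0.
      unfold Rdiv. rewrite Rmult_0_l, Rmult_0_r, Rabs_R0. lra.
  - destruct (IH ltac:(lia)) as [V [HV HVb]].
    set (p := INR n * h). set (q := INR (S n) * h).
    assert (Hqp : q - p = h) by (unfold q, p; rewrite S_INR; ring).
    assert (Hp0 : 0 <= p) by (unfold p; apply Rmult_le_pos; [apply pos_INR|lra]).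
    assert (Hq1 : q <= 1) by (apply Hxn; lia).
    assert (Hqx : q < x) by (apply Hlt; lia).
    destruct (core_interval g g1 g2 Mu x (2 - beta) p q q Hg Hg1 Hg2 ltac:(lra) Hp0
               ltac:(lra) Hq1 ltac:(lra) Hqx) as [W [HW HWb]].
    replace (1 - (2 - (2 - beta))) with (1 - beta) in HW by ring.
    exists (V + W). split.
    + apply (is_RInt_Chasles _ 0 p q V W); auto.
    + pose proof (ident beta g h r (S n) Hh Hb ltac:(lia)) as Hid.
      cbv zeta in Hid. replace (S n - 1)%nat with n in Hid by lia. fold x p q in Hid.
      rewrite !(rpow_pos (x - p)), !(rpow_pos (x - q)) in Hid by lra.
      simpl Tsum. fold p q. unfold Tj. replace (S n - 1)%nat with n by lia. fold p q.
      rewrite Hqp in HWb. rewrite <- Hid.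
      replace (V + W - _) with ((V - Tsum beta g h r n) + (W -
          ((g p * (q - x) + g q * (x - p)) / (q - p) *
           ((Rpower (x - p) (2 - beta) - Rpower (x - q) (2 - beta)) / (2 - beta)) +
           (g p - g q) / (q - p) *
           ((Rpower (x - p) (2 - beta + 1) - Rpower (x - q) (2 - beta + 1)) / (2 - beta + 1)))))
        by ring.
      eapply Rle_trans. apply Rabs_triang.
      replace (x - x) with 0 in * by ring.
      fold p in HVb. rewrite Hqp.
      apply Rle_trans with (Mu / 8 * h ^ 2 *
         ((Rpower x (2 - beta) - Rpower (x - p) (2 - beta)) / (2 - beta)) +
         Mu / 8 * h ^ 2 * ((Rpower (x - p) (2 - beta) - Rpower (x - q) (2 - beta)) / (2 - beta))).
      apply Rplus_le_compat; assumption.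
      right. field. lra.
Qed.

Lemma pow_le_small y a : 0 < y <= 1 -> 0 < a < 1 -> y <= Rpower y a.
Proof.
  intros Hy Ha. destruct (Req_dec y 1) as [->|Hy1].
  - unfold Rpower. rewrite ln_1, Rmult_0_r, exp_0. lra.
  - rewrite <- (Rpower_1 y) at 1 by lra. unfold Rpower.
    left. apply exp_increasing.
    assert (ln y < 0) by (rewrite <- ln_1; apply ln_increasing; lra). nra.
Qed.

Lemma pow_le_small2 y a : 0 < y <= 1 -> 0 < a < 1 -> Rpower y (a + 1) <= Rpower y a.
Proof.
  intros Hy Ha. rewrite Rpower_plus, Rpower_1 by lra.
  pose proof (Rpower_pos y a). nra.
Qed.

Lemma Rpower_split y a : 0 < y -> Rpower y a = Rpower y (a - 1) * y.
Proof. intros H. rewrite <- (Rpower_1 y) at 3 by lra. rewrite <- Rpower_plus. f_equal; ring. Qed.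

Lemma caputo_est g g1 x a :
  (forall y, I01 y -> derive_within I01 g y (g1 y)) ->
  0 < a < 1 -> 0 < x < 1 ->
  exists I0 d0 C, 0 < d0 /\ 0 <= C /\
   is_RInt_gen (fun s => rpow (x - s) (a - 1) * g s) (at_point 0) (at_left x) I0 /\
   forall b V, x - d0 < b < x -> is_RInt (fun s => rpow (x - s) (a - 1) * g s) 0 b V ->
     Rabs (V - I0) <= C * Rpower (x - b) a.
Proof.
  intros Hg Ha Hx.
  set (gx := fun y => g (clamp y)).
  assert (Ix : I01 x) by (unfold I01; lra).
  destruct (dw_lip g (g1 x) x (Hg x Ix)) as [dl [Hdl Hlip]].
  set (L := Rabs (g1 x) + 1).
  assert (HL : 0 <= L) by (unfold L; pose proof (Rabs_pos (g1 x)); lra).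
  set (k := fun s => rpow (x - s) (a - 1)).
  set (Q := fun s => k s * (gx s - g x)).
  assert (HQb : forall s, x - Rmin dl x < s -> Rabs (Q s) <= L * Rpower (x - s) a).
  { intros s Hs. destruct (Rlt_le_dec s x) as [Hsx|Hsx].
    - assert (Hm1 : Rmin dl x <= dl) by apply Rmin_l.
      assert (Hm2 : Rmin dl x <= x) by apply Rmin_r.
      assert (Is : I01 s) by (unfold I01; lra).
      unfold Q, gx, k. rewrite clamp_id by exact Is.
      rewrite Rabs_mult, rpow_pos by lra. rewrite (Rabs_pos_eq (Rpower _ _)) by (left; apply Rpower_pos).
      assert (H1 := Hlip s Is ltac:(rewrite Rabs_minus_sym, Rabs_pos_eq; lra)).
      fold L in H1. rewrite (Rabs_minus_sym s x), (Rabs_pos_eq (x - s)) in H1 by lra.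
      replace (L * Rpower (x - s) a) with (Rpower (x - s) (a - 1) * (L * (x - s))).
      apply Rmult_le_compat_l. left; apply Rpower_pos. lra.
      rewrite (Rpower_split (x - s) a) by lra. ring.
    - unfold Q, k. rewrite rpow_nonpos by lra. rewrite Rmult_0_l, Rabs_R0.
      apply Rmult_le_pos; auto. left; apply Rpower_pos. }
  assert (HQx : Q x = 0) by (unfold Q, k; rewrite rpow_nonpos by lra; ring).
  assert (HQc : forall s, 0 <= s <= x -> continuity_pt Q s).
  { intros s Hs. destruct (Rlt_le_dec s x) as [Hsx|Hsx].
    - unfold Q. apply continuity_pt_mult.
      apply continuity_pt_filterlim. apply cont_rpow_shift. lra.
      apply continuity_pt_minus. apply (gx_cpt g g1 s Hg). apply continuity_pt_const. intros u v; reflexivity.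
    - assert (s = x) by lra. subst s.
      unfold continuity_pt, continue_in, limit1_in, limit_in. intros eps He.
      destruct (small_pow a (eps / (L + 1)) ltac:(lra) ltac:(apply Rdiv_lt_0_compat; lra)) as [d [Hd Hsm]].
      exists (Rmin d (Rmin dl x)). split.
      + apply Rmin_glb_lt; auto. apply Rmin_glb_lt; lra.
      + intros z [_ Hz]. simpl in *. unfold R_dist in *. rewrite HQx, Rminus_0_r.
        assert (Hz1 : Rabs (z - x) < d) by (eapply Rlt_le_trans; [exact Hz|apply Rmin_l]).
        assert (Hz2 : Rabs (z - x) < Rmin dl x) by (eapply Rlt_le_trans; [exact Hz|apply Rmin_r]).
        apply Rabs_def2 in Hz1. apply Rabs_def2 in Hz2.
        destruct (Rlt_le_dec z x) as [Hzx|Hzx].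
        * eapply Rle_lt_trans. apply HQb. lra.
          assert (Rpower (x - z) a < eps / (L + 1)) by (apply Hsm; lra).
          apply Rle_lt_trans with ((L + 1) * Rpower (x - z) a).
          pose proof (Rpower_pos (x - z) a). nra.
          apply (Rmult_lt_reg_r (/ (L + 1))). apply Rinv_0_lt_compat; lra.
          replace ((L + 1) * Rpower (x - z) a * / (L + 1)) with (Rpower (x - z) a) by (field; lra).
          exact H.
        * unfold Q, k. rewrite rpow_nonpos by lra. rewrite Rmult_0_l, Rabs_R0. exact He. }
  assert (HQex : forall u v, 0 <= u <= v -> v <= x -> ex_RInt Q u v).
  { intros u v Huv Hvx. apply (@ex_RInt_continuous R_CompleteNormedModule). intros s Hs.
    rewrite Rmin_left in Hs by lra. rewrite Rmax_right in Hs by lra.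
    apply continuity_pt_filterlim. apply HQc. lra. }
  set (IQ := RInt Q 0 x).
  set (I0 := g x * (Rpower x a / a) + IQ).
  set (d0 := Rmin (Rmin dl x) 1).
  assert (Hd0 : 0 < d0) by (unfold d0; repeat apply Rmin_glb_lt; lra).
  assert (Hd0a : d0 <= Rmin dl x) by apply Rmin_l.
  assert (Hd0b : d0 <= 1) by apply Rmin_r.
  assert (Hd0c : Rmin dl x <= x) by apply Rmin_r.
  set (C := Rabs (g x) / a + L).
  assert (HC : 0 <= C) by (unfold C; pose proof (Rabs_pos (g x)); apply Rplus_le_le_0_compat; auto;
     apply Rdiv_le_0_compat; lra).
  assert (Hdec : forall b, x - d0 < b < x ->
     is_RInt (fun s => k s * g s) 0 b (g x * ((Rpower x a - Rpower (x - b) a) / a) + RInt Q 0 b) /\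
     Rabs (g x * ((Rpower x a - Rpower (x - b) a) / a) + RInt Q 0 b - I0) <= C * Rpower (x - b) a).
  { intros b Hb. split.
    - apply is_RInt_ext with (fun s => g x * k s + Q s).
      { intros s Hs. rewrite Rmin_left in Hs by lra. rewrite Rmax_right in Hs by lra.
        unfold Q, gx. rewrite clamp_id by (unfold I01; lra).
        change (g x * k s + k s * (g s - g x) = k s * g s :> R). ring. }
      apply (is_RInt_plus (fun s => g x * k s) Q).
      + apply (is_RInt_scal k 0 b (g x)). unfold k.
        pose proof (int_pow_shift x a 0 b ltac:(lra) ltac:(lra) ltac:(lra)) as H.
        rewrite Rminus_0_r in H. exact H.
      + apply (RInt_correct Q). apply HQex; lra.
    - assert (Hch : RInt Q 0 b + RInt Q b x = IQ).
      { unfold IQ. apply (RInt_Chasles Q 0 b x); apply HQex; lra. }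
      assert (Hbx : Rabs (RInt Q b x) <= L * (x - b)).
      { assert (Hi : is_RInt Q b x (RInt Q b x)) by (apply (RInt_correct Q); apply HQex; lra).
        assert (Hc1 := is_RInt_const b x L). assert (Hc2 := is_RInt_const b x (- L)).
        unfold scal in Hc1, Hc2; simpl in Hc1, Hc2; unfold mult in Hc1, Hc2; simpl in Hc1, Hc2.
        assert (Hpt : forall s, b < s < x -> - L <= Q s <= L).
        { intros s Hs. apply Rabs_le_bw. eapply Rle_trans. apply HQb. lra.
          rewrite <- (Rmult_1_r L) at 2. apply Rmult_le_compat_l; auto.
          replace 1 with (Rpower 1 a) by (unfold Rpower; rewrite ln_1, Rmult_0_r, exp_0; reflexivity).
          apply Rle_Rpower_l; lra. }
        assert (H1 := is_RInt_le _ _ b x _ _ ltac:(lra) Hi Hc1 ltac:(intros s Hs; apply Hpt; auto)).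
        assert (H2 := is_RInt_le _ _ b x _ _ ltac:(lra) Hc2 Hi ltac:(intros s Hs; apply Hpt; auto)).
        apply Rabs_le. nra. }
      replace (g x * ((Rpower x a - Rpower (x - b) a) / a) + RInt Q 0 b - I0)
        with (- (g x * (Rpower (x - b) a / a)) + - RInt Q b x)
        by (unfold I0; rewrite <- Hch; field; lra).
      eapply Rle_trans. apply Rabs_triang.
      rewrite !Rabs_Ropp, Rabs_mult, (Rabs_pos_eq (Rpower (x - b) a / a))
        by (apply Rdiv_le_0_compat; [left; apply Rpower_pos|lra]).
      assert (Hy : x - b <= Rpower (x - b) a) by (apply pow_le_small; lra).
      unfold C. replace ((Rabs (g x) / a + L) * Rpower (x - b) a) with
        (Rabs (g x) * (Rpower (x - b) a / a) + L * Rpower (x - b) a) by (field; lra).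
      apply Rplus_le_compat_l. eapply Rle_trans. exact Hbx.
      apply Rmult_le_compat_l; lra. }
  exists I0, d0, C. split; [exact Hd0|]. split; [exact HC|]. split.
  - apply filterlimi_locally. intros eps.
    destruct (small_pow a (eps / (C + 1)) ltac:(lra) ltac:(apply Rdiv_lt_0_compat; [apply cond_pos|lra]))
      as [d [Hd Hsm]].
    apply (Filter_prod _ _ _ (fun u => u = 0) (fun b => x - Rmin d0 d < b < x)).
    + reflexivity.
    + assert (Hm : 0 < Rmin d0 d) by (apply Rmin_glb_lt; lra).
      exists (mkposreal _ Hm). intros y Hy Hyx. simpl in Hy.
      unfold ball in Hy; simpl in Hy; unfold AbsRing_ball, abs, minus, plus, opp in Hy; simpl in Hy.
      apply Rabs_def2 in Hy. lra.
    + intros u b -> Hb. simpl.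
      assert (Hm1 : Rmin d0 d <= d0) by apply Rmin_l.
      assert (Hm2 : Rmin d0 d <= d) by apply Rmin_r.
      destruct (Hdec b ltac:(lra)) as [HI HB].
      eexists. split. exact HI.
      unfold ball; simpl; unfold AbsRing_ball, abs, minus, plus, opp; simpl.
      eapply Rle_lt_trans. exact HB.
      assert (Hp : Rpower (x - b) a < eps / (C + 1)) by (apply Hsm; lra).
      apply Rle_lt_trans with ((C + 1) * Rpower (x - b) a).
      pose proof (Rpower_pos (x - b) a). nra.
      apply (Rmult_lt_reg_r (/ (C + 1))). apply Rinv_0_lt_compat; lra.
      replace ((C + 1) * Rpower (x - b) a * / (C + 1)) with (Rpower (x - b) a) by (field; lra).
      exact Hp.
  - intros b V Hb HV. destruct (Hdec b Hb) as [HI HB]. unfold k in HI.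
    rewrite <- (is_RInt_unique _ _ _ _ HV), (is_RInt_unique _ _ _ _ HI). exact HB.
Qed.

Lemma main_est beta g g1 g2 Mu N r :
  (forall y, I01 y -> derive_within I01 g y (g1 y)) ->
  (forall y, I01 y -> derive_within I01 g1 y (g2 y)) ->
  (forall y, I01 y -> Rabs (g2 y) <= Mu) ->
  1 < beta < 2 -> (0 < N)%nat -> (1 <= r <= N - 1)%nat ->
  let h := / INR N in let x := INR r * h in let a := 2 - beta in
  exists I0,
   is_RInt_gen (fun s => rpow (x - s) (a - 1) * g s) (at_point 0) (at_left x) I0 /\
   Rabs (I0 - Tsum beta g h r r) <= Mu / 8 * h ^ 2 * (Rpower x a / a).
Proof.
  intros Hg Hg1 Hg2 Hb HN Hr h x a.
  assert (Ha : 0 < a < 1) by (unfold a; lra).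
  assert (HN' : 0 < INR N) by (apply lt_0_INR; lia).
  assert (Hh : 0 < h) by (apply Rinv_0_lt_compat; lra).
  assert (Hr1 : 1 <= INR r) by (replace 1 with (INR 1) by reflexivity; apply le_INR; lia).
  assert (HrN : INR r + 1 <= INR N) by (rewrite <- S_INR; apply le_INR; lia).
  assert (Hhx : h <= x) by (unfold x; nra).
  assert (Hx1 : x + h <= 1).
  { unfold x, h. apply (Rmult_le_reg_r (INR N)); auto.
    replace ((INR r * / INR N + / INR N) * INR N) with (INR r + 1) by (field; lra). lra. }
  assert (Hx : 0 < x < 1) by lra.
  destruct (caputo_est g g1 x a Hg Ha Hx) as [I0 [d0 [C [Hd0 [HC [Hgen Hbd]]]]]].
  exists I0. split; [exact Hgen|].
  set (c := Mu / 8 * h ^ 2).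
  set (p := INR (r - 1) * h).
  assert (Hp : p = x - h) by (unfold p, x; rewrite minus_INR by lia; simpl; ring).
  destruct (acc beta g g1 g2 Mu N r Hg Hg1 Hg2 Hb HN Hr (r - 1) ltac:(lia)) as [V0 [HV0 HV0b]].
  fold h x p in HV0, HV0b. replace (2 - beta) with a in HV0b by reflexivity.
  pose proof (ident beta g h r r Hh Hb ltac:(lia)) as Hid.
  cbv zeta in Hid. fold x p a in Hid.
  rewrite Rminus_eq_0, !(rpow_nonpos 0) in Hid by lra.
  rewrite !(rpow_pos (x - p)) in Hid by lra.
  set (A := (g p * (x - x) + g x * (x - p)) / (x - p)) in *.
  set (B := (g p - g x) / (x - p)) in *.
  set (K := C + Rabs A / a + Rabs B / (a + 1)).
  assert (HK : 0 <= K) by (unfold K; pose proof (Rabs_pos A); pose proof (Rabs_pos B);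
     assert (0 <= Rabs A / a) by (apply Rdiv_le_0_compat; lra);
     assert (0 <= Rabs B / (a + 1)) by (apply Rdiv_le_0_compat; lra); lra).
  apply Rle_plus_epsilon. intros eps He.
  destruct (small_pow a (eps / (K + 1)) ltac:(lra) ltac:(apply Rdiv_lt_0_compat; lra)) as [d [Hd Hsm]].
  set (y := Rmin (Rmin d0 h) d / 2).
  assert (Hy : 0 < y /\ y < d0 /\ y < h /\ y < d).
  { assert (0 < Rmin (Rmin d0 h) d) by (repeat apply Rmin_glb_lt; lra).
    assert (Rmin (Rmin d0 h) d <= Rmin d0 h) by apply Rmin_l.
    assert (Rmin (Rmin d0 h) d <= d) by apply Rmin_r.
    assert (Rmin d0 h <= d0) by apply Rmin_l.
    assert (Rmin d0 h <= h) by apply Rmin_r.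
    unfold y; lra. }
  set (b := x - y).
  destruct (core_interval g g1 g2 Mu x a p x b Hg Hg1 Hg2 Ha ltac:(lra) ltac:(lra) ltac:(lra)
     ltac:(unfold b; lra) ltac:(unfold b; lra)) as [W [HW HWb]].
  fold A B in HWb. replace (1 - (2 - a)) with (a - 1) in HW by ring.
  replace (x - p) with h in HWb at 3 by lra.
  assert (HF : is_RInt (fun s => rpow (x - s) (a - 1) * g s) 0 b (V0 + W)).
  { apply (is_RInt_Chasles _ 0 p b V0 W); auto.
    replace (a - 1) with (1 - beta) by (unfold a; ring). exact HV0. }
  assert (HFb := Hbd b (V0 + W) ltac:(unfold b; lra) HF).
  replace (x - b) with y in * by (unfold b; ring).
  assert (Hya : Rpower y a < eps / (K + 1)) by (apply Hsm; lra).
  assert (Hy1 : Rpower y (a + 1) <= Rpower y a) by (apply pow_le_small2; lra).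
  pose proof (Rpower_pos y a). pose proof (Rpower_pos y (a + 1)).
  assert (HKy : K * Rpower y a <= eps).
  { apply Rle_trans with ((K + 1) * Rpower y a). nra.
    apply (Rmult_le_reg_r (/ (K + 1))). apply Rinv_0_lt_compat; lra.
    replace ((K + 1) * Rpower y a * / (K + 1)) with (Rpower y a) by (field; lra).
    replace (eps * / (K + 1)) with (eps / (K + 1)) by reflexivity. lra. }
  assert (ET : Tsum beta g h r r = Tsum beta g h r (r - 1) + Tj beta g h r r).
  { destruct r as [|r']; [lia|]. replace (S r' - 1)%nat with r' by lia. reflexivity. }
  assert (ETj : Tj beta g h r r = rpow h a * (wt0 beta r r * g x - wt1 beta (r - 1) r * g p))
    by reflexivity.
  rewrite ET, ETj, <- Hid.
  assert (EA : (g p * 0 + g x * (x - p)) / (x - p) = A) by (unfold A; rewrite Rminus_eq_0; reflexivity).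
  rewrite EA.
  assert (HMu : 0 <= Mu) by (eapply Rle_trans; [apply Rabs_pos|apply (Hg2 x); unfold I01; lra]).
  assert (Hc : 0 <= c) by (unfold c; pose proof (pow2_ge_0 h); apply Rmult_le_pos; lra).
  set (X := Rpower x a) in *. set (Xp := Rpower (x - p) a) in *.
  set (Xp1 := Rpower (x - p) (a + 1)) in *. set (Y := Rpower y a) in *.
  set (Y1 := Rpower y (a + 1)) in *.
  fold c in HV0b, HWb.
  assert (E1 : Rabs (A * (Y / a)) <= Rabs A / a * Y).
  { rewrite Rabs_mult, (Rabs_pos_eq (Y / a)) by (apply Rdiv_le_0_compat; lra). right; field; lra. }
  assert (E2 : Rabs (B * (Y1 / (a + 1))) <= Rabs B / (a + 1) * Y).
  { rewrite Rabs_mult, (Rabs_pos_eq (Y1 / (a + 1))) by (apply Rdiv_le_0_compat; lra).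
    replace (Rabs B / (a + 1) * Y) with (Rabs B * (Y / (a + 1))) by (field; lra).
    apply Rmult_le_compat_l. apply Rabs_pos. unfold Rdiv. apply Rmult_le_compat_r.
    left; apply Rinv_0_lt_compat; lra. exact Hy1. }
  assert (E3 : 0 <= c * (Y / a)) by (apply Rmult_le_pos; auto; apply Rdiv_le_0_compat; lra).
  apply Rabs_le_bw in HFb. apply Rabs_le_bw in HV0b. apply Rabs_le_bw in HWb.
  apply Rabs_le_bw in E1. apply Rabs_le_bw in E2.
  unfold K in HKy.
  apply Rabs_le. split.
  - replace (c * ((Xp - Y) / a)) with (c * (Xp / a) - c * (Y / a)) in HWb by (field; lra).
    replace (c * ((X - Xp) / a)) with (c * (X / a) - c * (Xp / a)) in HV0b by (field; lra).
    replace (A * ((Xp - 0) / a)) with (A * ((Xp - Y) / a) + A * (Y / a)) by (field; lra).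
    replace (B * ((Xp1 - 0) / (a + 1))) with (B * ((Xp1 - Y1) / (a + 1)) + B * (Y1 / (a + 1)))
      by (field; lra).
    replace ((C + Rabs A / a + Rabs B / (a + 1)) * Y) with (C * Y + Rabs A / a * Y + Rabs B / (a + 1) * Y) in HKy by ring.
    lra.
  - replace (c * ((Xp - Y) / a)) with (c * (Xp / a) - c * (Y / a)) in HWb by (field; lra).
    replace (c * ((X - Xp) / a)) with (c * (X / a) - c * (Xp / a)) in HV0b by (field; lra).
    replace (A * ((Xp - 0) / a)) with (A * ((Xp - Y) / a) + A * (Y / a)) by (field; lra).
    replace (B * ((Xp1 - 0) / (a + 1))) with (B * ((Xp1 - Y1) / (a + 1)) + B * (Y1 / (a + 1)))
      by (field; lra).
    replace ((C + Rabs A / a + Rabs B / (a + 1)) * Y) with (C * Y + Rabs A / a * Y + Rabs B / (a + 1) * Y) in HKy by ring.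
    lra.
Qed.

Theorem theorem5p1
  (T : R) (M N : nat) (beta : R) (k : nat)
  (u d1 d2 d3 d4 : R -> R -> R) (Mu : R) :
  0 < T -> (0 < M)%nat -> (0 < N)%nat ->
  1 < beta < 2 -> (k <= M - 1)%nat ->
  (forall t, 0 <= t <= T -> forall x, I01 x ->
     derive_within I01 (fun y => u y t) x (d1 x t) /\
     derive_within I01 (fun y => d1 y t) x (d2 x t) /\
     derive_within I01 (fun y => d2 y t) x (d3 x t) /\
     derive_within I01 (fun y => d3 y t) x (d4 x t)) ->
  (forall x t, I01 x -> 0 <= t <= T ->
     forall eps, 0 < eps -> exists delta, 0 < delta /\
       forall y s, I01 y -> 0 <= s <= T -> Rabs (y - x) < delta -> Rabs (s - t) < delta ->
         Rabs (d4 y s - d4 x t) < eps) ->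
  is_lub (fun z => exists x t, I01 x /\ 0 <= t <= T /\ z = Rabs (d4 x t)) Mu ->
  let tau := T / INR M in
  let h := / INR N in
  let tk1 := INR (k + 1) * tau in
  let xr := fun r : nat => INR r * h in
  let nu := rpow h (2 - beta) / Gamma (2 - beta) in
  let Rh := fun r : nat =>
    caputo beta (fun s => d2 s tk1) (xr r)
    - nu * sum_f_R0 (fun j => w beta j r * d2 (xr j) tk1) r in
  forall r : nat, (1 <= r <= N - 1)%nat ->
    Rabs (Rh r) <= h ^ 2 * Mu / (8 * Gamma (3 - beta)).
Proof.
  intros HT HM HN Hb Hk Hder Hcont Hlub tau h tk1 xr nu Rh r Hr.
  assert (Ht : 0 <= tk1 <= T).
  { unfold tk1, tau. assert (0 < INR M) by (apply lt_0_INR; lia).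
    assert (INR (k + 1) <= INR M) by (apply le_INR; lia).
    assert (0 <= INR (k + 1)) by apply pos_INR.
    split. apply Rmult_le_pos; auto. apply Rdiv_le_0_compat; lra.
    replace (INR (k + 1) * (T / INR M)) with (T * (INR (k + 1) / INR M)) by (field; lra).
    rewrite <- (Rmult_1_r T) at 2. apply Rmult_le_compat_l; [lra|].
    apply (Rmult_le_reg_r (INR M)); auto. field_simplify; lra. }
  set (g := fun s => d2 s tk1).
  assert (Hg : forall y, I01 y -> derive_within I01 g y (d3 y tk1)) by
    (intros y Hy; apply (Hder tk1 Ht y Hy)).
  assert (Hg1 : forall y, I01 y -> derive_within I01 (fun y => d3 y tk1) y (d4 y tk1)) by
    (intros y Hy; apply (Hder tk1 Ht y Hy)).
  assert (Hg2 : forall y, I01 y -> Rabs (d4 y tk1) <= Mu).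
  { intros y Hy. apply (proj1 Hlub). exists y, tk1. auto. }
  destruct (main_est beta g (fun y => d3 y tk1) (fun y => d4 y tk1) Mu N r Hg Hg1 Hg2 Hb HN Hr)
    as [I0 [Hgen Hest]].
  set (a := 2 - beta) in *.
  assert (Ha : 0 < a < 1) by (unfold a; lra).
  destruct (Gamma_facts a Ha) as [HG HG1].
  replace (3 - beta) with (a + 1) by (unfold a; ring). rewrite HG1.
  assert (Hcap : caputo beta g (xr r) = / Gamma a * I0).
  { unfold caputo. f_equal. apply is_RInt_gen_unique.
    replace (1 - beta) with (a - 1) by (unfold a; ring). exact Hgen. }
  assert (Hsum := sum_w beta g h r r).
  unfold wt1 in Hsum. rewrite Nat.eqb_refl in Hsum. fold a in Hsum.
  assert (Hrew : Rh r = / Gamma a * (I0 - Tsum beta g h r r)).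
  { unfold Rh, nu. fold g. rewrite Hcap. fold a.
    change (fun j => w beta j r * d2 (xr j) tk1) with (fun j => w beta j r * g (INR j * h)).
    change (xr r) with (INR r * h) in *.
    set (SS := sum_f_R0 (fun j => w beta j r * g (INR j * h)) r) in *.
    replace (rpow h a / Gamma a * SS) with (/ Gamma a * (rpow h a * SS)) by (unfold Rdiv; ring).
    rewrite Hsum. ring. }
  rewrite Hrew, Rabs_mult, Rabs_inv, (Rabs_pos_eq (Gamma a)) by lra.
  assert (HN' : 0 < INR N) by (apply lt_0_INR; lia).
  assert (Hh : 0 < h) by (apply Rinv_0_lt_compat; lra).
  assert (Hx : 0 < INR r * h < 1).
  { assert (1 <= INR r) by (replace 1 with (INR 1) by reflexivity; apply le_INR; lia).
    assert (INR r + 1 <= INR N) by (rewrite <- S_INR; apply le_INR; lia).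
    split. nra. unfold h. apply (Rmult_lt_reg_r (INR N)); auto.
    replace (INR r * / INR N * INR N) with (INR r) by (field; lra). lra. }
  assert (HX : Rpower (INR r * h) a <= 1).
  { replace 1 with (Rpower 1 a) by (unfold Rpower; rewrite ln_1, Rmult_0_r, exp_0; reflexivity).
    apply Rle_Rpower_l; lra. }
  assert (HMu : 0 <= Mu) by (eapply Rle_trans; [apply Rabs_pos|apply (Hg2 0); unfold I01; lra]).
  assert (Hc : 0 <= Mu / 8 * h ^ 2) by (pose proof (pow2_ge_0 h); apply Rmult_le_pos; lra).
  apply Rle_trans with (/ Gamma a * (Mu / 8 * h ^ 2 * (Rpower (INR r * h) a / a))).
  apply Rmult_le_compat_l. left; apply Rinv_0_lt_compat; lra. exact Hest.
  apply Rle_trans with (/ Gamma a * (Mu / 8 * h ^ 2 * (1 / a))).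
  apply Rmult_le_compat_l. left; apply Rinv_0_lt_compat; lra.
  apply Rmult_le_compat_l. exact Hc. unfold Rdiv. apply Rmult_le_compat_r.
  left; apply Rinv_0_lt_compat; lra. exact HX.
  right. field. lra.
Qed.
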